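(* Let $0<\rho\le\infty$ and let $f(z)=\sum_{k\ge0}c_kz^k$ be a power series with real coefficients convergent on $D(0,\rho)$. Fix an integer $N\ge1$. If $f[A]$ is positive semidefinite for every $A\in\mathbb{P}^1_N((0,\rho))$, then the first $N$ non-zero Taylor coefficients $c_j$ of $f$ (or all of the non-zero ones, if there are fewer than $N$) are strictly positive.
   Context: $\mathbb{P}^1_N(I)$ is the set of $N\times N$ positive semidefinite matrices of rank at most one with all entries in $I$. $D(0,\rho)$ is the open disc of radius $\rho$ about $0$. For a matrix $A=(a_{jk})$, $f[A]:=(f(a_{jk}))$. *)

(* Defs.v *)
From Stdlib Require Import Reals Lra Lia Classical ClassicalEpsilon.
Open Scope R_scope.

(* Extended radius: [None] stands for rho = +infinity. *)
Definition erad := option R.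

Definition erad_pos (rho : erad) : Prop :=
  match rho with None => True | Some r => 0 < r end.

Definition in_disc (rho : erad) (x : R) : Prop :=
  match rho with None => True | Some r => Rabs x < r end.

Definition in_open_interval (rho : erad) (x : R) : Prop :=
  0 < x /\ in_disc rho x.

Definition pser_converges (c : nat -> R) (x : R) : Prop :=
  exists l, Pser c x l.

(* Its sum (meaningful when it converges). *)
Definition pser_val (c : nat -> R) (x : R) : R :=
  epsilon (inhabits 0) (fun l => Pser c x l).

Fixpoint fsum (n : nat) (f : nat -> R) : R :=
  match n with
  | O => 0
  | S m => fsum m f + f m
  end.

(* Real N x N matrices are functions nat -> nat -> R, read on indices < N. *)
Definition psd (N : nat) (A : nat -> nat -> R) : Prop :=
  (forall i j, (i < N)%nat -> (j < N)%nat -> A i j = A j i) /\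
  (forall v : nat -> R,
      0 <= fsum N (fun i => fsum N (fun j => v i * A i j * v j))).

Definition rank_le1 (N : nat) (A : nat -> nat -> R) : Prop :=
  exists u w : nat -> R,
    forall i j, (i < N)%nat -> (j < N)%nat -> A i j = u i * w j.

Definition P1N (N : nat) (rho : erad) (A : nat -> nat -> R) : Prop :=
  psd N A /\ rank_le1 N A /\
  (forall i j, (i < N)%nat -> (j < N)%nat -> in_open_interval rho (A i j)).

Definition entrywise (f : R -> R) (A : nat -> nat -> R) : nat -> nat -> R :=
  fun i j => f (A i j).

Fixpoint count_nz (c : nat -> R) (k : nat) : nat :=
  match k with
  | O => O
  | S m => (count_nz c m + (if Req_EM_T (c m) 0 then 0 else 1))%nat
  end.

(* Main.v *)
Require Import Defs.
From Stdlib Require Import Reals Lra Lia Classical ClassicalEpsilon.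
Open Scope R_scope.

Lemma fsum_ext n f g : (forall i, (i < n)%nat -> f i = g i) -> fsum n f = fsum n g.
Proof. induction n; simpl; intros H; auto. rewrite IHn; [|intros; apply H; lia]. rewrite H; auto. Qed.

Lemma fsum_plus n f g : fsum n (fun i => f i + g i) = fsum n f + fsum n g.
Proof. induction n; simpl; [lra|]. rewrite IHn; lra. Qed.

Lemma fsum_scal n a f : fsum n (fun i => a * f i) = a * fsum n f.
Proof. induction n; simpl; [lra|]. rewrite IHn; lra. Qed.

Lemma fsum_quad n K (a v : nat -> R) :
  fsum n (fun i => fsum n (fun j => v i * (K * a i * a j) * v j))
  = K * (fsum n (fun i => v i * a i))^2.
Proof.
  transitivity (fsum n (fun i => (K * (v i * a i)) * fsum n (fun j => v j * a j))).
  - apply fsum_ext; intros i _. rewrite <- fsum_scal. apply fsum_ext; intros; ring.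
  - transitivity (fsum n (fun i => (K * fsum n (fun j => v j * a j)) * (v i * a i))).
    + apply fsum_ext; intros; ring.
    + rewrite fsum_scal. ring.
Qed.

Lemma pow01 x n : 0 <= x <= 1 -> 0 <= x ^ n <= 1.
Proof. intros H; induction n; simpl; nra. Qed.

Lemma fsum_abs n f : Rabs (fsum n f) <= fsum n (fun i => Rabs (f i)).
Proof. induction n; simpl. rewrite Rabs_R0; lra. eapply Rle_trans; [apply Rabs_triang|]. lra. Qed.

Lemma fsum_poly_bound n v y : 0 <= y <= 1 ->
  Rabs (fsum n (fun l => v l * y ^ l)) <= fsum n (fun l => Rabs (v l)).
Proof.
  intros Hy. eapply Rle_trans; [apply fsum_abs|].
  induction n; simpl; [lra|].
  rewrite Rabs_mult. pose proof (pow01 y n Hy). pose proof (Rabs_pos (v n)).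
  rewrite (Rabs_right (y^n)) by lra. nra.
Qed.

Lemma isum_plus f g l1 l2 : infinite_sum f l1 -> infinite_sum g l2 ->
  infinite_sum (fun n => f n + g n) (l1 + l2).
Proof.
  intros H1 H2. unfold infinite_sum.
  assert (H := CV_plus _ _ _ _ H1 H2). intros eps He.
  destruct (H eps He) as [N0 HN]. exists N0. intros n Hn.
  rewrite plus_sum. apply HN; auto.
Qed.

Lemma isum_scal f l a b : infinite_sum f l ->
  infinite_sum (fun n => a * f n * b) (a * l * b).
Proof.
  intros H1.
  assert (Hc : Un_cv (fun _ => a * b) (a * b)).
  { intros eps He. exists O. intros. unfold Rdist. rewrite Rminus_diag, Rabs_R0. lra. }
  assert (H := CV_mult _ _ _ _ H1 Hc). intros eps He.
  destruct (H eps He) as [N0 HN]. exists N0. intros n Hn.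
  replace (sum_f_R0 (fun n0 => a * f n0 * b) n) with (sum_f_R0 f n * (a * b)).
  replace (a * l * b) with (l * (a * b)) by ring. apply HN; auto.
  rewrite Rmult_comm, scal_sum. apply sum_eq; intros; ring.
Qed.

Lemma isum_zero : infinite_sum (fun _ => 0) 0.
Proof. intros eps He. exists O. intros. rewrite sum_eq_R0 by auto. unfold Rdist. rewrite Rminus_diag, Rabs_R0. lra. Qed.

Lemma isum_fsum N (g : nat -> nat -> R) (l : nat -> R) :
  (forall i, (i < N)%nat -> infinite_sum (g i) (l i)) ->
  infinite_sum (fun n => fsum N (fun i => g i n)) (fsum N l).
Proof.
  induction N; intros H; simpl.
  - apply isum_zero.
  - apply isum_plus. apply IHN; intros; apply H; lia. apply H; lia.
Qed.

Lemma isum_ext f g l : (forall n, f n = g n) -> infinite_sum f l -> infinite_sum g l.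
Proof.
  intros E H eps He. destruct (H eps He) as [N0 HN]. exists N0. intros n Hn.
  rewrite <- (sum_eq f g) by auto. auto.
Qed.

Lemma isum_le s l b k : infinite_sum s l -> (forall n, (n >= k)%nat -> sum_f_R0 s n <= b) -> l <= b.
Proof.
  intros H Hb. destruct (Rle_lt_dec l b) as [|Hlt]; auto.
  destruct (H (l - b)) as [N0 HN]; [lra|].
  specialize (HN (Nat.max N0 k) ltac:(lia)). specialize (Hb (Nat.max N0 k) ltac:(lia)).
  unfold Rdist in HN. apply Rabs_def2 in HN. lra.
Qed.

Lemma pser_val_spec c y : pser_converges c y -> Pser c y (pser_val c y).
Proof. intros [l Hl]. unfold pser_val. apply epsilon_spec. exists l; auto. Qed.

Lemma term_le_sum s n m : (n <= m)%nat -> Rabs (s n) <= sum_f_R0 (fun i => Rabs (s i)) m.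
Proof.
  induction m; intros H.
  - assert (n = O) by lia; subst; simpl; lra.
  - simpl. destruct (Nat.eq_dec n (S m)) as [->|].
    + assert (0 <= sum_f_R0 (fun i => Rabs (s i)) m).
      { apply cond_pos_sum. intros; apply Rabs_pos. } lra.
    + pose proof (IHm ltac:(lia)). pose proof (Rabs_pos (s (S m))). lra.
Qed.

Lemma isum_bounded s l : infinite_sum s l -> exists M, forall n, Rabs (s n) <= M.
Proof.
  intros H. destruct (H 1 ltac:(lra)) as [N0 HN].
  exists (2 + sum_f_R0 (fun i => Rabs (s i)) N0). intros n.
  assert (0 <= sum_f_R0 (fun i => Rabs (s i)) N0).
  { apply cond_pos_sum. intros; apply Rabs_pos. }
  destruct (Compare_dec.le_lt_dec n N0).
  - pose proof (term_le_sum s n N0 l0). lra.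
  - destruct n as [|n]; [lia|].
    pose proof (HN (S n) ltac:(lia)). pose proof (HN n ltac:(lia)).
    unfold Rdist in *. simpl in *.
    replace (s (S n)) with ((sum_f_R0 s n + s (S n) - l) - (sum_f_R0 s n - l)) by ring.
    eapply Rle_trans; [apply Rabs_triang|]. rewrite Rabs_Ropp. lra.
Qed.

Definition shiftc (w : nat -> R) (l : nat) : R :=
  match l with O => 0 | S l' => w l' end.

Fixpoint coefP (c : nat -> R) (x : R) (j : nat) : nat -> R :=
  match j with
  | O => fun l => match l with O => 1 | _ => 0 end
  | S j' => if Req_EM_T (c j') 0 then coefP c x j'
            else fun l => shiftc (coefP c x j') l - x ^ j' * coefP c x j' l
  end.

Fixpoint polP (c : nat -> R) (x : R) (j : nat) (y : R) : R :=
  match j with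
  | O => 1
  | S j' => polP c x j' y * (if Req_EM_T (c j') 0 then 1 else (y - x ^ j'))
  end.

Definition ev (w : nat -> R) (M : nat) (y : R) := fsum M (fun l => w l * y ^ l).

Lemma ev_shift w M y : ev (shiftc w) (S M) y = y * ev w M y.
Proof.
  unfold ev. induction M; simpl. ring.
  simpl in IHM. rewrite IHM. ring.
Qed.

Lemma coefP_supp c x j l : (count_nz c j < l)%nat -> coefP c x j l = 0.
Proof.
  revert l; induction j; intros l H; simpl in *.
  - destruct l; [lia|auto].
  - destruct (Req_EM_T (c j) 0).
    + apply IHj; lia.
    + destruct l; [lia|]. simpl. rewrite !IHj by lia. ring.
Qed.

Lemma coefP_ev c x j M y : (count_nz c j < M)%nat -> ev (coefP c x j) M y = polP c x j y.
Proof.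
  revert M; induction j; intros M H; simpl in *.
  - revert H. induction M; intros H; [lia|]. unfold ev in *. simpl. destruct M.
    + simpl. ring.
    + rewrite IHM by lia. ring.
  - destruct (Req_EM_T (c j) 0).
    + rewrite IHj by lia. ring.
    + destruct M as [|M0]; [lia|].
      unfold ev. rewrite (fsum_ext _ _ (fun l => shiftc (coefP c x j) l * y ^ l + (- x^j) * (coefP c x j l * y ^ l))) by (intros; ring).
      rewrite fsum_plus, fsum_scal. fold (ev (shiftc (coefP c x j)) (S M0) y).
      fold (ev (coefP c x j) (S M0) y). rewrite ev_shift.
      unfold ev at 2; simpl. rewrite (coefP_supp c x j M0) by lia. fold (ev (coefP c x j) M0 y).
      rewrite IHj by lia. ring.
Qed.

Lemma polP_root c x j n : (n < j)%nat -> c n <> 0 -> polP c x j (x ^ n) = 0.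
Proof.
  induction j; intros H Hc; [lia|]. simpl.
  destruct (Nat.eq_dec n j) as [->|].
  - destruct (Req_EM_T (c j) 0); [contradiction|]. ring.
  - rewrite IHj; [ring|lia|auto].
Qed.

Lemma half_pow_lt i k : (i < k)%nat -> (/2) ^ k < (/2) ^ i.
Proof.
  intros H. replace k with (i + (k - i))%nat by lia. rewrite pow_add.
  assert (0 < (/2)^i) by (apply pow_lt; lra).
  assert (0 <= (/2)^(k-i) < 1) by (apply pow_lt_1_compat; [lra|lia]). nra.
Qed.

Lemma polP_nz c j k : (j <= k)%nat -> polP c (/2) j ((/2) ^ k) <> 0.
Proof.
  induction j; intros H; simpl; [lra|].
  apply Rmult_integral_contrapositive. split. apply IHj; lia.
  destruct (Req_EM_T (c j) 0). lra. pose proof (half_pow_lt j k ltac:(lia)). lra.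
Qed.

Lemma sum_first_zero s n : (forall i, (i < n)%nat -> s i = 0) -> sum_f_R0 s n = s n.
Proof.
  induction n; intros H; simpl; auto.
  rewrite IHn by (intros; apply H; lia). rewrite (H n) by lia. ring.
Qed.

Lemma choose_r0 rho : erad_pos rho -> exists r0, 0 < r0 /\ in_disc rho (2 * r0) /\
  forall y, 0 < y <= r0 -> in_disc rho y.
Proof.
  destruct rho as [r|]; simpl; intros H.
  - exists (r/4). split; [lra|]. split.
    + rewrite Rabs_right; lra.
    + intros y Hy. rewrite Rabs_right; lra.
  - exists 1. repeat split; lra.
Qed.

Theorem lemma1p3 (rho : erad) (c : nat -> R) (N : nat) :
  erad_pos rho ->
  (forall x : R, in_disc rho x -> pser_converges c x) ->
  (1 <= N)%nat ->
  (forall A : nat -> nat -> R,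
      P1N N rho A -> psd N (entrywise (pser_val c) A)) ->
  forall k : nat, c k <> 0 -> (count_nz c k < N)%nat -> 0 < c k.
Proof.
  intros Hrho Hconv HN Hpsd k Hck Hcnt.
  destruct (Rlt_le_dec 0 (c k)) as [|Hle]; auto. exfalso.
  assert (Hneg : c k < 0) by lra.
  destruct (choose_r0 rho Hrho) as [r0 [Hr0 [HR Hdisc]]].
  set (R0 := 2 * r0).
  destruct (Hconv R0 HR) as [l0 Hl0].
  destruct (isum_bounded _ _ Hl0) as [M HM].
  assert (HM0 : 0 <= M) by (specialize (HM O); pose proof (Rabs_pos (c O * R0 ^ 0)); lra).
  set (x := / 2).
  assert (Hx : 0 <= x <= 1) by (unfold x; lra).
  set (v := coefP c x k).
  set (B := fsum N (fun l => Rabs (v l))).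
  set (P := fun n => polP c x k (x ^ n)).
  assert (HPev : forall n, ev v N (x ^ n) = P n) by (intros; apply coefP_ev; auto).
  assert (HPB : forall n, P n ^ 2 <= B ^ 2).
  { intros n. rewrite <- HPev. pose proof (fsum_poly_bound N v (x ^ n) (pow01 x n Hx)).
    unfold ev. set (e := fsum N (fun l => v l * (x ^ n) ^ l)) in *.
    pose proof (Rabs_pos e). rewrite <- (pow2_abs e). fold B in H. nra. }
  assert (HPk : P k <> 0) by (apply polP_nz; lia).
  set (alpha := - c k * P k ^ 2).
  assert (Halpha : 0 < alpha).
  { unfold alpha. pose proof (Rsqr_pos_lt (P k) HPk). unfold Rsqr in *. nra. }
  set (K := B ^ 2 * M).
  assert (HK : 0 <= K) by (unfold K; pose proof (pow2_ge_0 B); nra).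
  assert (HR0 : 0 < R0) by (unfold R0; lra).
  assert (HRk : 0 < R0 ^ k) by (apply pow_lt; lra).
  set (q := Rmin (/2) (alpha * R0 ^ k / (4 * K + 1))).
  assert (Hq : 0 < q /\ q <= /2 /\ q * (4 * K + 1) <= alpha * R0 ^ k).
  { unfold q. split; [|split].
    - apply Rmin_glb_lt; [lra|]. apply Rdiv_lt_0_compat; nra.
    - apply Rmin_l.
    - pose proof (Rmin_r (/2) (alpha * R0 ^ k / (4 * K + 1))).
      apply Rmult_le_compat_r with (r := 4 * K + 1) in H; [|lra].
      replace (alpha * R0 ^ k / (4 * K + 1) * (4 * K + 1)) with (alpha * R0 ^ k) in H by (field; lra). exact H. }
  destruct Hq as [Hq0 [Hq1 Hq2]].
  set (t := q * R0).
  assert (Ht : 0 < t <= r0) by (unfold t, R0; nra).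
  set (A := fun i j => t * x ^ i * x ^ j).
  assert (HA : forall i j, 0 < A i j <= r0).
  { intros i j. unfold A. pose proof (pow01 x i Hx). pose proof (pow01 x j Hx).
    assert (0 < x ^ i) by (apply pow_lt; unfold x; lra).
    assert (0 < x ^ j) by (apply pow_lt; unfold x; lra).
    assert (t * x ^ i <= t) by nra. assert (0 < t * x ^ i) by nra. split; nra. }
  assert (HP1 : P1N N rho A).
  { split; [split|split].
    - intros; unfold A; ring.
    - intros w. unfold A. rewrite fsum_quad. pose proof (pow2_ge_0 (fsum N (fun i => w i * x ^ i))). nra.
    - exists (fun i => t * x ^ i), (fun j => x ^ j). intros; unfold A; ring.
    - intros i j _ _. split. apply HA. apply Hdisc, HA. }
  destruct (Hpsd A HP1) as [_ Hq].
  specialize (Hq v). unfold entrywise in Hq.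
  set (s := fun n => fsum N (fun i => fsum N (fun j => v i * (c n * A i j ^ n) * v j))).
  assert (Hs : infinite_sum s (fsum N (fun i => fsum N (fun j => v i * pser_val c (A i j) * v j)))).
  { apply isum_fsum. intros i _. apply isum_fsum. intros j _. apply isum_scal.
    apply pser_val_spec. apply Hconv. apply Hdisc, HA. }
  assert (Hseq : forall n, s n = c n * t ^ n * P n ^ 2).
  { intros n. unfold s. rewrite <- HPev. unfold ev.
    rewrite <- (fsum_quad N (c n * t ^ n) (fun i => (x ^ n) ^ i) v).
    apply fsum_ext; intros i _. apply fsum_ext; intros j _. unfold A.
    rewrite !Rpow_mult_distr, <- !pow_mult. rewrite (Nat.mul_comm n i), (Nat.mul_comm n j). ring. }
  assert (Hs0 : forall n, (n < k)%nat -> s n = 0).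
  { intros n Hn. rewrite Hseq. destruct (Req_EM_T (c n) 0) as [->|Hcn]. ring.
    unfold P. rewrite polP_root by auto. ring. }
  assert (Hsb : forall n, s n <= K * q ^ n).
  { intros n. rewrite Hseq. unfold t. rewrite Rpow_mult_distr.
    pose proof (HM n). pose proof (HPB n). pose proof (pow2_ge_0 (P n)).
    assert (0 < q ^ n) by (apply pow_lt; lra).
    assert (c n * R0 ^ n <= M) by (eapply Rle_trans; [apply Rle_abs|auto]).
    replace (c n * (q ^ n * R0 ^ n) * P n ^ 2) with ((c n * R0 ^ n) * q ^ n * P n ^ 2) by ring.
    unfold K. assert (c n * R0 ^ n * q ^ n <= M * q ^ n) by nra.
    assert (0 <= M * q ^ n) by nra.
    set (a := c n * R0 ^ n * q ^ n) in *. set (p := P n ^ 2) in *.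
    replace (B ^ 2 * M * q ^ n) with (B ^ 2 * (M * q ^ n)) by ring.
    destruct (Rle_lt_dec 0 a).
    - apply Rle_trans with (a * B ^ 2). apply Rmult_le_compat_l; auto.
      rewrite Rmult_comm. apply Rmult_le_compat_l; auto. apply pow2_ge_0.
    - assert (a * p <= 0) by nra. pose proof (pow2_ge_0 B). nra. }
  assert (Hpart : forall m, sum_f_R0 s (k + m) <= - alpha * t ^ k + 2 * K * q ^ (k + 1) - 2 * K * q ^ (k + 1 + m)).
  { induction m.
    - rewrite Nat.add_0_r, sum_first_zero by auto. rewrite Hseq. unfold alpha. rewrite Nat.add_0_r. lra.
    - replace (k + S m)%nat with (S (k + m)) by lia. simpl sum_f_R0.
      pose proof (Hsb (S (k + m))).
      replace (S (k + m)) with (k + 1 + m)%nat in * by lia.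
      replace (k + 1 + S m)%nat with (S (k + 1 + m)) by lia. simpl pow.
      assert (0 <= K * q ^ (k + 1 + m)) by (apply Rmult_le_pos; auto; apply pow_le; lra).
      replace (2 * K * (q * q ^ (k + 1 + m))) with (2 * q * (K * q ^ (k + 1 + m))) by ring.
      set (y := K * q ^ (k + 1 + m)) in *. assert (E : 2 * K * q ^ (k + 1 + m) = 2 * y) by (unfold y; ring). rewrite E in IHm. nra. }
  assert (Hqk : 0 < q ^ k) by (apply pow_lt; lra).
  assert (Hneg2 : - alpha * t ^ k + 2 * K * q ^ (k + 1) < 0).
  { unfold t. rewrite Rpow_mult_distr, pow_add. simpl pow.
    assert (0 <= K * q) by nra. nra. }
  pose proof (isum_le s _ (- alpha * t ^ k + 2 * K * q ^ (k + 1)) k Hs).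
  assert (forall n, (n >= k)%nat -> sum_f_R0 s n <= - alpha * t ^ k + 2 * K * q ^ (k + 1)).
  { intros n Hn. replace n with (k + (n - k))%nat by lia. pose proof (Hpart (n - k)%nat).
    assert (0 <= K * q ^ (k + 1 + (n - k))) by (apply Rmult_le_pos; auto; apply pow_le; lra). lra. }
  specialize (H H0). lra.
Qed.
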